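(* Let $A$ be a DFA and let $\tilde{A}$ be the DFA obtained from $A$ by the following minimization procedure: first remove all states not reachable from the initial state; then partition the remaining states into Myhill–Nerode classes (classes of indistinguishable states); then, for each class, repeatedly apply elementary merge operations merging two states of the class until each class is collapsed into a single state. If $A$ contains a single closed communicating class and this class is aperiodic, then $\tilde{A}$ also contains a single closed communicating class and this class is aperiodic.
   Context: An NFA is a tuple $A = \langle \Sigma, Q, q_0, \tau, \phi\rangle$ with finite alphabet $\Sigma$, finite state set $Q$, initial state $q_0$, transition function $\tau : Q \times \Sigma \to 2^Q$ and termination function $\phi : Q \to \{0,1\}$; $\tau$ extends to strings by $\tau(q,\lambda) = \{q\}$, $\tau(q, x\sigma) = \bigcup_{q' \in \tau(q,x)} \tau(q',\sigma)$, and to sets by $\tau(S, X) = \bigcup_{q\in S, x \in X}\tau(q,x)$; write $\tau_1(S) = \tau(S,\Sigma)$, $\tau_\star(S) = \tau(S,\Sigma^\star)$. A DFA is an NFA with $|\tau(q,\sigma)| = 1$ for all $q,\sigma$. The language of $A$ is the set of strings $x$ such that $\phi(q) = 1$ for some $q \in \tau(q_0,x)$; two states $q,q'$ are indistinguishable if the NFAs obtained from $A$ by making $q$, resp. $q'$, the initial state accept the same language. A state $q'$ is reachable if $q' \in \tau_\star(q_0)$. States $q,q'$ communicate if $q' \in \tau_\star(q)$ and $q \in \tau_\star(q')$; the equivalence classes are communicating classes, and a class $Q'$ is closed if $\tau_\star(Q') = Q'$. For $k>1$ a closed communicating class $Q'$ is $k$-periodic if it has a partition into $k$ parts $Q'_0,\ldots,Q'_{k-1}$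 with $\tau_1(Q'_i) = Q'_{(i+1)\bmod k}$ for all $i$; it is aperiodic if it is not $k$-periodic for any $k>1$. Given NFAs $A$ and $\tilde{A} = \langle \Sigma, \tilde{Q}, \tilde{q}_0, \tilde{\tau}, \tilde{\phi}\rangle$, $\tilde{A}$ is obtained from $A$ by a merge operation $\Psi : Q \to \tilde{Q}$ if $\Psi$ is surjective, $\Psi(q_0) = \tilde{q}_0$, $\phi(q) = \tilde{\phi}(\Psi(q))$ for all $q$, and $q' \in \tau(q,\sigma)$ implies $\Psi(q') \in \tilde{\tau}(\Psi(q),\sigma)$. The merge is elementary if $|\tilde{Q}| = |Q| - 1$ (exactly two states are identified). *)

(* Defs.v *)
From mathcomp Require Import all_boot.
Set Implicit Arguments. Unset Strict Implicit. Unset Printing Implicit Defensive.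

Record nfa (Sigma : finType) := NFA {
  state :> finType;
  q0 : state;
  tau : state -> Sigma -> {set state};
  phi : state -> bool
}.

Section Defs.
Variable Sigma : finType.
Implicit Types A : nfa Sigma.

Definition tau_str A (q : A) (x : seq Sigma) : {set A} :=
  foldl (fun (S : {set A}) s => \bigcup_(q' in S) tau q' s) [set q] x.

Definition tau1 A (S : {set A}) : {set A} :=
  \bigcup_(q in S) \bigcup_(s : Sigma) tau q s.

Definition reaches A (q q' : A) : Prop := exists x, q' \in tau_str q x.

Definition reachable A (q : A) : Prop := reaches (q0 A) q.

Definition is_dfa A : Prop := forall (q : A) (s : Sigma), #|tau q s| = 1.

Definition accepts A (q : A) (x : seq Sigma) : bool :=
  [exists q' in tau_str q x, phi q'].

Definition indistinguishable A (q q' : A) : Prop :=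
  forall x, accepts q x = accepts q' x.

Definition communicate A (q q' : A) : Prop := reaches q q' /\ reaches q' q.

Definition comm_class A (C : {set A}) : Prop :=
  exists q : A, forall q' : A, q' \in C <-> communicate q q'.

Definition closed_class A (C : {set A}) : Prop :=
  forall q' : A, (exists2 q, q \in C & reaches q q') <-> q' \in C.

Definition k_periodic A (k : nat) (C : {set A}) : Prop :=
  1 < k /\
  exists P : nat -> {set A},
    [/\ (forall i, i < k -> P i != set0),
        (forall i j, i < j -> j < k -> [disjoint P i & P j]),
        \bigcup_(i < k) P i = C &
        (forall i, i < k -> tau1 (P i) = P (i.+1 %% k))].

Definition aperiodic A (C : {set A}) : Prop :=
  forall k, 1 < k -> ~ k_periodic k C.

Definition unique_closed_class_aperiodic A : Prop :=
  exists C : {set A},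
    [/\ comm_class C, closed_class C, aperiodic C &
        forall C' : {set A}, comm_class C' -> closed_class C' -> C' = C].

(* Psi is a merge operation from the sub-automaton of reachable states of A
   onto At (Psi is only relevant on reachable states). *)
Definition merge_from_reachable A (At : nfa Sigma) (Psi : A -> At) : Prop :=
  [/\ (forall p : At, exists2 q : A, reachable q & Psi q = p),
      Psi (q0 A) = q0 At,
      (forall q : A, reachable q -> phi q = phi (Psi q)) &
      (forall (q q' : A) (s : Sigma), reachable q -> q' \in tau q s ->
          Psi q' \in tau (Psi q) s)].

(* At is the DFA produced by the minimization procedure: the composite of all
   the merges is a merge from the reachable part of A whose fibres are exactly
   the Myhill--Nerode classes of reachable states. *)
Definition minimization_of A (At : nfa Sigma) : Prop :=
  is_dfa At /\
  exists Psi : A -> At,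
    merge_from_reachable Psi /\
    (forall q q' : A, reachable q -> reachable q' ->
       (Psi q = Psi q' <-> indistinguishable q q')).

End Defs.

(* Main.v *)
From Stdlib Require Import Relations.
Require Import Defs.
From mathcomp Require Import all_boot zify.
Set Implicit Arguments. Unset Strict Implicit. Unset Printing Implicit Defensive.
Section L.
Variable Sigma : finType.
Variable A : nfa Sigma.

Definition stepr (q q' : A) : Prop := exists s, q' \in tau q s.

Lemma reaches_rtn1 (q q' : A) : reaches q q' <-> clos_refl_trans_n1 _ stepr q q'.
Proof.
split.
- case=> x; elim/last_ind: x q' => [|y s IH] q'.
    rewrite /tau_str /= inE => /eqP ->; exact: rtn1_refl.
  rewrite /tau_str foldl_rcons -/(tau_str q y) => /bigcupP [r Hr Hq'].
  apply: (@Relation_Operators.rtn1_trans _ _ _ r); first by exists s.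
  exact: IH.
- elim=> [|r q'' [s Hs] _ [x Hx]]; first by exists [::]; rewrite /tau_str /= inE.
  exists (rcons x s); rewrite /tau_str foldl_rcons -/(tau_str q x).
  by apply/bigcupP; exists r.
Qed.

Lemma reaches_refl (q : A) : reaches q q.
Proof. by apply/reaches_rtn1; apply: rtn1_refl. Qed.

Lemma reaches_trans (q1 q2 q3 : A) : reaches q1 q2 -> reaches q2 q3 -> reaches q1 q3.
Proof.
move=> H1 H2; have K1 := @clos_rtn1_rt _ _ _ _ (proj1 (reaches_rtn1 _ _) H1).
have K2 := @clos_rtn1_rt _ _ _ _ (proj1 (reaches_rtn1 _ _) H2).
apply/reaches_rtn1; apply: (@clos_rt_rtn1 _ _ _ _); exact: rt_trans K1 K2.
Qed.

Lemma reaches_step (q q' : A) s : q' \in tau q s -> reaches q q'.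
Proof. by move=> H; apply/reaches_rtn1; apply: (@Relation_Operators.rtn1_trans _ _ _ q); [exists s|apply: rtn1_refl]. Qed.

Definition er : rel A := fun x y => [exists s, y \in tau x s].

Lemma reaches_connect (q q' : A) : reaches q q' <-> connect er q q'.
Proof.
split.
- move/reaches_rtn1; elim=> [|r q'' [s Hs] _ IH]; first exact: connect0.
  apply: connect_trans IH (connect1 _); by apply/existsP; exists s.
- case/connectP=> p; elim: p q => [|z p IH] q /=; first by move=> _ ->; apply: reaches_refl.
  case/andP=> /existsP [s Hs] Hp Hl; apply: reaches_trans (reaches_step Hs) (IH _ Hp Hl).
Qed.

Lemma in_tau1 (S : {set A}) q' : q' \in tau1 S <-> exists2 q, q \in S & exists s, q' \in tau q s.
Proof.
split.
- by case/bigcupP=> q Hq /bigcupP [s _ H]; exists q => //; exists s.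
- by case=> q Hq [s H]; apply/bigcupP; exists q => //; apply/bigcupP; exists s.
Qed.

End L.

Lemma modS_small k x : x < k -> x.+1 %% k = (if x.+1 == k then 0 else x.+1).
Proof.
move=> H; case: eqP => [->|ne]; first by rewrite modnn.
by rewrite modn_small // ltn_neqAle H andbT; apply/eqP.
Qed.

Lemma modS_inj k i j : i < k -> j < k -> j.+1 %% k = i.+1 %% k -> j = i.
Proof.
move=> Hi Hj; rewrite !modS_small //.
by case: eqP => Ej; case: eqP => Ei //; lia.
Qed.

Section M.
Variables (Sigma : finType) (A At : nfa Sigma) (Psi : A -> At).
Hypothesis dA : is_dfa A.
Hypothesis dAt : is_dfa At.
Hypothesis mP : merge_from_reachable Psi.

Lemma reach_reaches (q q' : A) : reachable q -> reaches q q' -> reachable q'.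
Proof. exact: reaches_trans. Qed.

Lemma tau_psi (q : A) s : reachable q -> tau (Psi q) s = Psi @: tau q s.
Proof.
move=> Hq; have /cards1P [q' E] : #|tau q s| == 1 by apply/eqP; apply: dA.
have /cards1P [p E'] : #|tau (Psi q) s| == 1 by apply/eqP; apply: dAt.
case: mP => _ _ _ Ht.
have H1 : q' \in tau q s by rewrite E inE.
have := Ht q q' s Hq H1; rewrite E E' inE => /eqP <-.
by rewrite imset_set1.
Qed.

Lemma lift_reaches (q q' : A) : reachable q -> reaches q q' -> reaches (Psi q) (Psi q').
Proof.
move=> Hq /reaches_rtn1; elim=> [|r q'' [s Hs] Hr IH]; first exact: reaches_refl.
apply: reaches_trans IH _.
have Hrr : reachable r by apply: reach_reaches Hq _; apply/reaches_rtn1.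
case: mP => _ _ _ Ht; exact: reaches_step (Ht _ _ _ Hrr Hs).
Qed.

Lemma back_reaches (q : A) p : reachable q -> reaches (Psi q) p ->
  exists2 q', reaches q q' & p = Psi q'.
Proof.
move=> Hq /reaches_rtn1; elim=> [|r p'' [s Hs] _ [q' Hq' Er]]; first by exists q => //; apply: reaches_refl.
rewrite Er in Hs.
have Hr : reachable q' by apply: reach_reaches Hq Hq'.
move: Hs; rewrite tau_psi // => /imsetP [q'' Hq'' ->].
by exists q'' => //; apply: reaches_trans Hq' (reaches_step Hq'').
Qed.

End M.

Theorem theorem4 (Sigma : finType) (A At : nfa Sigma) :
  is_dfa A ->
  minimization_of A At ->
  unique_closed_class_aperiodic A ->
  unique_closed_class_aperiodic At.
Proof.
move=> dA [dAt [Psi [mP _]]] [C [[c0 HC] clC apC uC]].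
have HCc : forall q q', q \in C -> q' \in C -> reaches q q'.
  move=> q q' /HC [_ H1] /HC [H2 _]; exact: reaches_trans H1 H2.
have term : forall q : A, exists2 c, c \in C & reaches q c.
  move=> q; pose S (r : A) := [set y | connect (@er _ A) r y].
  case: (@arg_minnP _ q (fun r => connect (@er _ A) q r) (fun r => #|S r|) (connect0 _ _)).
  move=> r Hqr Hmin.
  have back : forall r', connect (@er _ A) r r' -> connect (@er _ A) r' r.
    move=> r' Hrr'.
    have sub : S r' \subset S r.
      by apply/subsetP => y; rewrite !inE => H; apply: connect_trans Hrr' H.
    have : S r' == S r by rewrite eqEcard sub /=; apply: Hmin; apply: connect_trans Hqr Hrr'.
    move/eqP => E; have : r \in S r by rewrite inE connect0.
    by rewrite -E inE.
  have KC : S r = C.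
    apply: uC.
    - exists r => y; rewrite inE; split.
        by move=> H; split; apply/reaches_connect => //; apply: back.
      by case=> /reaches_connect.
    - move=> y; split.
        case=> x; rewrite inE => Hx /reaches_connect Hxy; rewrite inE.
        exact: connect_trans Hx Hxy.
      by move=> Hy; exists y => //; apply: reaches_refl.
  exists r; first by rewrite -KC inE connect0.
  exact/reaches_connect.
have [c1 Hc1 Rc1] := term (q0 A).
have rC : forall c, c \in C -> reachable c.
  by move=> c Hc; apply: reaches_trans Rc1 (HCc _ _ Hc1 Hc).
pose D0 := Psi @: C.
have Hb : forall c y, c \in C -> reaches (Psi c) y -> y \in D0.
  move=> c y Hc Hr; case: (back_reaches dA dAt mP (rC _ Hc) Hr) => c' Hcc' ->.
  apply: imset_f; apply/clC; by exists c.
have Ha : forall c y, c \in C -> y \in D0 -> communicate (Psi c) y.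
  move=> c y Hc /imsetP [c' Hc' ->].
  by split; apply: (lift_reaches mP); auto.
exists D0; split.
- exists (Psi c1) => y; split; first exact: Ha.
  by case=> H _; apply: Hb H.
- move=> y; split; first by case=> p /imsetP [c Hc ->]; apply: Hb.
  by move=> Hy; exists y => //; apply: reaches_refl.
- move=> k Hk [_ [P [Pne Pdis Pun Ptau]]].
  have k0 : 0 < k by apply: ltn_trans Hk.
  have PD : forall i p, i < k -> p \in P i -> p \in D0.
    by move=> i p Hi Hp; rewrite -Pun; apply/bigcupP; exists (Ordinal Hi).
  have Pin : forall p, p \in D0 -> exists2 i, i < k & p \in P i.
    by move=> p; rewrite -Pun => /bigcupP [i _ H]; exists i.
  have Puniq : forall i j p, i < k -> j < k -> p \in P i -> p \in P j -> i = j.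
    move=> i j p Hi Hj H1 H2; case: (ltngtP i j) => // Hij.
    + by rewrite (disjointFr (Pdis _ _ Hij Hj) H1) in H2.
    + by rewrite (disjointFr (Pdis _ _ Hij Hi) H2) in H1.
  have Tsub : forall i (q q' : A) s, i < k -> q \in C -> Psi q \in P i -> q' \in tau q s ->
      q' \in C /\ Psi q' \in P (i.+1 %% k).
    move=> i q q' s Hi Hq HP Hs; split; first by apply/clC; exists q => //; apply: reaches_step Hs.
    rewrite -Ptau //; apply/in_tau1; exists (Psi q) => //; exists s.
    by case: (mP) => _ _ _ Ht; apply: Ht => //; apply: rC.
  apply: (apC k Hk); split => //.
  exists (fun i => C :&: Psi @^-1: P i); split.
  + move=> i Hi; have /set0Pn [p Hp] := Pne i Hi.
    case/imsetP: (PD _ _ Hi Hp) => c Hc E; apply/set0Pn; exists c.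
    by rewrite !inE Hc -E Hp.
  + move=> i j Hij Hjk; rewrite disjoint_subset; apply/subsetP => q; rewrite !inE => /andP [_ Hi]; apply/negP => /andP [_ Hj].
    have := Puniq i j (Psi q) (ltn_trans Hij Hjk) Hjk Hi Hj.
    by move=> E; rewrite E ltnn in Hij.
  + apply/setP => q; apply/bigcupP/idP; first by case=> i _; rewrite inE => /andP [].
    move=> Hq; case: (Pin (Psi q) (imset_f _ Hq)) => i Hi HPi.
    by exists (Ordinal Hi) => //; rewrite !inE Hq.
  + move=> i Hi; apply/setP => q'; apply/idP/idP.
    * case/in_tau1 => q; rewrite !inE => /andP [HqC HqP] [s Hs].
      by case: (Tsub i q q' s Hi HqC HqP Hs) => -> ->.
    * rewrite !inE => /andP [Hq'C Hq'P].
      have [r0 Hr0 Hne] : exists2 r0, r0 \in C & r0 != q'.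
        have /set0Pn [p0 Hp0] := Pne 0 k0.
        have /set0Pn [p1 Hp1] := Pne 1 Hk.
        case/imsetP: (PD _ _ k0 Hp0) => x Hx Ex.
        case/imsetP: (PD _ _ Hk Hp1) => y Hy Ey.
        have Hxy : x != y.
          apply/eqP => E; have := Puniq 0 1 p0 k0 Hk Hp0; rewrite Ex E -Ey => /(_ Hp1).
          by [].
        case: (eqVneq x q') => Exq; last by exists x.
        by exists y => //; rewrite -Exq eq_sym.
      have inv : forall y, clos_refl_trans_n1 _ (@stepr _ A) r0 y ->
          y = r0 \/ exists2 r, reaches r0 r & stepr r y.
        by move=> y; case=> [|r z Hs Hr]; [left|right; exists r => //; apply/reaches_rtn1].
      case: (inv q') => [|Eq|[r Hr [s Hs]]]; first by apply/reaches_rtn1; apply: HCc.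
        by rewrite Eq eqxx in Hne.
      have HrC : r \in C by apply/clC; exists r0.
      case: (Pin (Psi r) (imset_f _ HrC)) => j Hj HPj.
      case: (Tsub j r q' s Hj HrC HPj Hs) => _ HPy.
      have E := Puniq _ _ _ (ltn_pmod _ k0) (ltn_pmod _ k0) HPy Hq'P.
      have Eji := modS_inj Hi Hj E; subst j.
      apply/in_tau1; exists r; first by rewrite !inE HrC.
      by exists s.
- move=> D [d HD] clD.
  have Hd : d \in D by apply/HD; split; apply: reaches_refl.
  case: (mP) => Hsurj _ _ _.
  have [q Hq Eq] := Hsurj d.
  have [c Hc Hqc] := term q.
  have Hdc : reaches d (Psi c) by rewrite -Eq; apply: (lift_reaches mP).
  have HcD : Psi c \in D by apply/clD; exists d.
  have Hcd : reaches (Psi c) d by case: (proj1 (HD _) HcD) => _ ; case: (proj1 (HD _) Hd) => _ H1 H2; apply: reaches_trans H2 _.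
  apply/setP => y; apply/idP/idP => Hy.
  + apply: (Hb c) => //; apply: reaches_trans Hcd _.
    case: (proj1 (HD _) Hd) => _ H1; case: (proj1 (HD _) Hy) => H2 _.
    exact: reaches_trans H1 H2.
  + apply/clD; exists (Psi c) => //; by case: (Ha c y Hc Hy).
Qed.
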